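(* Let $x,y$ be non-commuting indeterminates and $C=xyx^{-1}y^{-1}$. Let $(R_n)_{n\in\mathbb Z}$ satisfy $$R_{2n}CR_{2n-2}=1+R_{2n-1},\qquad R_{2n+1}CR_{2n-1}=1+R_{2n}^4\qquad(n\in\mathbb Z),$$ with $R_0=yxy^{-1}$ and $R_1=y$, and set $u_n=R_{2n}$. Then for every $n\ge1$, the expansion of $u_nu_{n+1}$ as a Laurent polynomial in $x,y$ with non-negative integer coefficients contains the monomial $C^{-1}=yxy^{-1}x^{-1}$ with positive coefficient.
   Context: Work in the free skew field (non-commutative rational functions) over $\mathbb C$ generated by $x,y$. For $n\ge0$, each $u_n$ is a Laurent polynomial in $x,y$ (a $\mathbb Z$-linear combination of words in $x^{\pm1},y^{\pm1}$) with non-negative integer coefficients. *)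

(* Defs.v *)
(* The integral group ring Z[F_2] of the free group on x, y
   (the ring of non-commutative Laurent polynomials in x, y). *)
From mathcomp Require Import all_boot all_order all_algebra.
Set Implicit Arguments. Unset Strict Implicit. Unset Printing Implicit Defensive.
Import Order.TTheory GRing.Theory Num.Theory.
Local Open Scope ring_scope.

(* A letter: (g, e) with g = false for x, g = true for y; e = true means the
   inverse of the generator. *)
Definition letter := (bool * bool)%type.
Definition lx : letter := (false, false).
Definition ly : letter := (true, false).
Definition lxi : letter := (false, true).
Definition lyi : letter := (true, true).
Definition linv (a : letter) : letter := (a.1, ~~ a.2).

Definition word := seq letter.

(* free reduction of a word (stack-based), giving the reduced representative
   of the corresponding element of the free group F_2 *)
Definition push (a : letter) (r : word) : word :=
  match r with
  | b :: r' => if b == linv a then r' else a :: r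
  | [::] => [:: a]
  end.
Definition reduce (w : word) : word := foldr push [::] w.

(* A Laurent polynomial is represented by a formal finite sum of
   int-weighted words; its coefficient at a group element is obtained by
   collecting the terms whose words reduce to that element. *)
Definition lpoly := seq (int * word)%type.

Definition lcoef (p : lpoly) (w : word) : int :=
  \sum_(t <- p | reduce t.2 == reduce w) t.1.

(* equality in Z[F_2] *)
Definition leq_poly (p q : lpoly) : Prop := forall w, lcoef p w = lcoef q w.

Definition ladd (p q : lpoly) : lpoly := p ++ q.
Definition lmul (p q : lpoly) : lpoly :=
  [seq (a.1 * b.1, a.2 ++ b.2) | a <- p, b <- q].
Definition lmono (w : word) : lpoly := [:: (1, w)].
Definition lone : lpoly := lmono [::].
Definition lpow (p : lpoly) (n : nat) : lpoly := iter n (lmul p) lone.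

Definition Cw : word := [:: lx; ly; lxi; lyi].
Definition Cinvw : word := [:: ly; lx; lyi; lxi].

(* Main.v *)
Require Import Defs.
From mathcomp Require Import all_boot all_order all_algebra zify.
Set Implicit Arguments. Unset Strict Implicit. Unset Printing Implicit Defensive.
Import Order.TTheory GRing.Theory Num.Theory.
Local Open Scope ring_scope.


Fixpoint rd (w : word) : bool :=
  match w with a :: ((b :: _) as r) => (b != linv a) && rd r | _ => true end.

Lemma linvK a : linv (linv a) = a.
Proof. by case: a => [g e]; rewrite /linv /= negbK. Qed.

Lemma rd_cons a r : rd (a :: r) -> rd r.
Proof. by case: r => //= b r /andP[]. Qed.

Lemma push_rd a r : rd r -> rd (push a r).
Proof.
case: r => [|b r] //= H. case: ifP => [_|/negbT hb]; first exact: rd_cons H.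
by rewrite /= hb.
Qed.

Lemma reduce_rd w : rd (reduce w).
Proof. by elim: w => //= a w IH; apply: push_rd. Qed.

Lemma push_cancel a r : rd r -> push a (push (linv a) r) = r.
Proof.
case: r => [|b r] /=; first by rewrite eqxx.
rewrite linvK; case: eqP => [->|nb] H.
  case: r H => [|c r] //= /andP[hc _]; by rewrite (negbTE hc).
by rewrite /= eqxx.
Qed.

Lemma push_cancel' a r : rd r -> push (linv a) (push a r) = r.
Proof. by move=> h; rewrite -{2}(linvK a) push_cancel. Qed.

Definition act (u : word) (r : word) := foldr push r u.

Lemma reduce_cat u v : reduce (u ++ v) = act u (reduce v).
Proof. by rewrite /reduce /act foldr_cat. Qed.

Lemma act_rd u r : rd r -> rd (act u r).
Proof. by elim: u => //= a u IH H; apply: push_rd; apply: IH. Qed.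

Lemma act_push a s r : rd s -> rd r -> act (push a s) r = push a (act s r).
Proof.
case: s => [|b s] //= Hs Hr. case: ifP => [/eqP ->|_] //=.
by rewrite push_cancel // act_rd // (rd_cons Hs).
Qed.

Lemma act_reduce u r : rd r -> act u r = act (reduce u) r.
Proof.
move=> Hr; elim: u => //= a u IH.
by rewrite act_push ?reduce_rd // IH.
Qed.

Lemma reduce_id r : rd r -> reduce r = r.
Proof.
elim: r => //= a r IH H; rewrite IH ?(rd_cons H) //.
case: r H {IH} => [|b r] //= /andP[hb _]; by rewrite (negbTE hb).
Qed.

Lemma reduceK w : reduce (reduce w) = reduce w.
Proof. exact/reduce_id/reduce_rd. Qed.

Lemma reduce_catl u v : reduce (u ++ v) = reduce (reduce u ++ v).
Proof. by rewrite !reduce_cat act_reduce ?reduce_rd. Qed.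

Lemma reduce_catr u v : reduce (u ++ v) = reduce (u ++ reduce v).
Proof. by rewrite !reduce_cat reduceK. Qed.

Definition winv (w : word) : word := rev (map linv w).

Lemma winvK w : winv (winv w) = w.
Proof. by rewrite /winv map_rev revK -map_comp map_id_in // => a _ /=; rewrite linvK. Qed.

Lemma winv_cat u v : winv (u ++ v) = winv v ++ winv u.
Proof. by rewrite /winv map_cat rev_cat. Qed.

Lemma reduce_winvl u : reduce (winv u ++ u) = [::].
Proof.
elim: u => //= a u IH.
rewrite (_ : winv (a :: u) = winv u ++ [:: linv a]); last first.
  by rewrite /winv /= rev_cons cats1.
rewrite -catA reduce_cat /= push_cancel' ?reduce_rd // -reduce_cat //.
Qed.

Lemma reduce_winvr u : reduce (u ++ winv u) = [::].
Proof. by rewrite -{1}(winvK u) reduce_winvl. Qed.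

Lemma reduce_congr u v w : reduce v = reduce w -> reduce (u ++ v) = reduce (u ++ w).
Proof. by move=> h; rewrite reduce_catr h -reduce_catr. Qed.
Lemma reduce_congl u v w : reduce v = reduce w -> reduce (v ++ u) = reduce (w ++ u).
Proof. by move=> h; rewrite reduce_catl h -reduce_catl. Qed.

Lemma reduce_shift a b w :
  (reduce (a ++ b) == reduce w) = (reduce b == reduce (winv a ++ w)).
Proof.
apply/eqP/eqP => h.
  by rewrite -(reduce_congr (winv a) h) catA reduce_catl reduce_winvl.
by rewrite (reduce_congr a h) catA reduce_catl reduce_winvr.
Qed.


Lemma lcoef_red p w w' : reduce w = reduce w' -> lcoef p w = lcoef p w'.
Proof. by rewrite /lcoef => ->. Qed.

Lemma lcoef_mul p q w :
  lcoef (lmul p q) w = \sum_(a <- p) a.1 * lcoef q (winv a.2 ++ w).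
Proof.
rewrite /lcoef /lmul big_mkcond big_allpairs_dep /=.
apply: eq_bigr => a _; rewrite big_distrr [RHS]big_mkcond /=; apply: eq_bigr => b _ /=.
by rewrite reduce_shift; case: ifP; rewrite ?mulr0.
Qed.

Definition supp (p : lpoly) := undup [seq reduce a.2 | a <- p].

Lemma sum_group p (F : word -> int)
  (hF : forall u v, reduce u = reduce v -> F u = F v) :
  \sum_(a <- p) a.1 * F a.2 = \sum_(g <- supp p) lcoef p g * F g.
Proof.
have U : uniq (supp p) by apply: undup_uniq.
transitivity (\sum_(g <- supp p) \sum_(a <- p | g == reduce a.2) a.1 * F a.2).
  under [RHS]eq_bigr do rewrite big_mkcond.
  rewrite [RHS]exchange_big /=; apply: eq_big_seq => a ha; rewrite -big_mkcond /=.
  rewrite -big_filter (@filter_pred1_uniq _ _ (reduce a.2)) ?big_seq1 //.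
  by rewrite mem_undup (map_f (fun a : int * word => reduce a.2) ha).
rewrite big_seq [RHS]big_seq; apply: eq_bigr => g; rewrite mem_undup => /mapP [a0 _ ->].
rewrite /lcoef big_distrl /= reduceK.
apply: eq_big => [a|a /eqP h]; first by rewrite eq_sym.
by congr (_ * _); apply: hF; rewrite reduceK.
Qed.

Lemma lcoef_conv p q w :
  lcoef (lmul p q) w = \sum_(g <- supp p) lcoef p g * lcoef q (winv g ++ w).
Proof.
rewrite lcoef_mul (@sum_group p (fun u => lcoef q (winv u ++ w))) // => u v huv.
apply: lcoef_red.
have h1 : reduce (u ++ (winv u ++ w)) = reduce w.
  by apply/eqP; rewrite reduce_shift.
have h2 : reduce (v ++ (winv u ++ w)) = reduce w by rewrite -(reduce_congl _ huv).
by apply/eqP; rewrite -reduce_shift h2.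
Qed.

Lemma lcoef_supp p w : lcoef p w != 0 -> reduce w \in supp p.
Proof.
apply: contraR => hn; rewrite /lcoef big1_seq // => t /andP [/eqP ht tp].
case/negP: hn; rewrite -ht mem_undup.
exact: (map_f (fun a : int * word => reduce a.2) tp).
Qed.

Lemma supp_red p g : g \in supp p -> reduce g = g.
Proof. by rewrite mem_undup => /mapP [a _ ->]; rewrite reduceK. Qed.

Lemma sum_one (s : seq word) g1 (F : word -> int) : uniq s -> g1 \in s ->
  (forall g, g \in s -> g != g1 -> F g = 0) -> \sum_(g <- s) F g = F g1.
Proof.
move=> U g1s h; rewrite (bigD1_seq g1) //= big1_seq ?addr0 // => g /andP[].
by move=> ne gs; apply: h.
Qed.

Lemma argmax (s : seq word) (P : pred word) (h : word -> int) : has P s ->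
  exists g, [/\ g \in s, P g & forall g', g' \in s -> P g' -> h g' <= h g].
Proof.
elim: s => //= a s IH /orP [Pa|hs].
  case: (boolP (has P s)) => [/IH [g [gs Pg hg]]|hn].
    case: (lerP (h a) (h g)) => hag.
      exists g; split; rewrite ?inE ?gs ?orbT // => g'; rewrite inE => /orP[/eqP->|]//.
      by move=> g's Pg'; apply: hg.
    exists a; split; rewrite ?inE ?eqxx // => g'; rewrite inE => /orP[/eqP->|]//.
    by move=> g's Pg'; apply: le_trans (hg _ g's Pg') (ltW hag).
  exists a; split; rewrite ?inE ?eqxx // => g'; rewrite inE => /orP[/eqP->|]//.
  by move=> g's Pg'; case/hasP: hn; exists g'.
case: (IH hs) => g [gs Pg hg].
case: (boolP (P a)) => Pa.
  case: (lerP (h a) (h g)) => hag.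
    exists g; split; rewrite ?inE ?gs ?orbT // => g'; rewrite inE => /orP[/eqP->|]//.
    by move=> g's Pg'; apply: hg.
  exists a; split; rewrite ?inE ?eqxx // => g'; rewrite inE => /orP[/eqP->|]//.
  by move=> g's Pg'; apply: le_trans (hg _ g's Pg') (ltW hag).
exists g; split; rewrite ?inE ?gs ?orbT // => g'; rewrite inE => /orP[/eqP->|]//.
  by move=> Pa'; rewrite Pa' in Pa.
by move=> g's Pg'; apply: hg.
Qed.

Lemma shift_eq a b w : reduce (a ++ b) = reduce w -> reduce b = reduce (winv a ++ w).
Proof. by move=> h; apply/eqP; rewrite -reduce_shift h. Qed.

Lemma cancel_r g w m : reduce (g ++ m) = reduce (w ++ m) -> reduce g = reduce w.
Proof.
move=> h; have := reduce_congl (winv m) h.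
by rewrite -!catA !(reduce_catr _ (m ++ _)) reduce_winvr !cats0.
Qed.

Lemma lcoef_add p q w : lcoef (ladd p q) w = lcoef p w + lcoef q w.
Proof. by rewrite /lcoef /ladd big_cat. Qed.

Lemma lcoef_mono m w : lcoef (lmono m) w = if reduce m == reduce w then 1 else 0.
Proof. by rewrite /lcoef /lmono big_cons big_nil /=; case: ifP; rewrite ?addr0. Qed.


Section Top.
Variables al be : int.

Definition lw (a : letter) : int := (if a.1 then be else al) * (if a.2 then -1 else 1).
Definition fw (w : word) : int := foldr (fun a s => lw a + s) 0 w.

Lemma fw_cat u v : fw (u ++ v) = fw u + fw v.
Proof. by elim: u => /= [|a u ->]; rewrite ?add0r ?addrA. Qed.

Lemma lw_linv a : lw (linv a) = - lw a.
Proof. by case: a => [[] []]; rewrite /lw /= ?mulrN1 ?mulr1 ?opprK. Qed.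

Lemma fw_winv u : fw (winv u) = - fw u.
Proof.
elim: u => [|a u IH]; first by rewrite /= oppr0.
rewrite /winv /= rev_cons -cats1 fw_cat -/(winv u) IH /= lw_linv addr0 opprD addrC.
done.
Qed.

Lemma fw_push a r : fw (push a r) = lw a + fw r.
Proof.
case: r => [|b r] //=. case: ifP => [/eqP->|] //=.
by rewrite lw_linv addrA addrN add0r.
Qed.

Lemma fw_reduce w : fw (reduce w) = fw w.
Proof. by elim: w => //= a w IH; rewrite fw_push IH. Qed.

Lemma fw_red x y : reduce x = reduce y -> fw x = fw y.
Proof. by move=> h; rewrite -fw_reduce h fw_reduce. Qed.

Definition top p m v := [/\ lcoef p m = 1, fw m = v &
  forall w, v <= fw w -> reduce w != reduce m -> lcoef p w = 0].

Lemma top_nz p m v w : top p m v -> lcoef p w != 0 -> fw w < v \/ reduce w = reduce m.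
Proof.
case=> _ _ h nz; case: (ltrP (fw w) v) => hv; first by left.
right; apply/eqP; apply: contraNT nz => hn; by rewrite h.
Qed.

Lemma top_gt p m v w : top p m v -> v < fw w -> lcoef p w = 0.
Proof.
case=> _ fm h hv; apply: h; first exact: ltW.
apply/eqP => e; move: hv; by rewrite (fw_red e) fm ltxx.
Qed.

Lemma top_eq p p' m v : top p m v -> leq_poly p p' -> top p' m v.
Proof. by case=> h1 h2 h3 e; split; rewrite -?e // => w a b; rewrite -e; apply: h3. Qed.

Lemma top_mono m : top (lmono m) m (fw m).
Proof.
split; rewrite ?lcoef_mono ?eqxx // => w _ hn.
rewrite lcoef_mono; case: eqP => // e; case/eqP: hn. by rewrite e.
Qed.

Lemma mul_top p q m m' v v' : top p m v -> top q m' v' ->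
  top (lmul p q) (m ++ m') (v + v').
Proof.
move=> tp tq; have [p1 fm hp] := tp; have [q1 fm' hq] := tq.
have ms : reduce m \in supp p by apply: lcoef_supp; rewrite p1.
split.
- rewrite lcoef_conv (@sum_one _ (reduce m)) ?undup_uniq //.
    rewrite (lcoef_red _ (reduceK m)) p1 mul1r.
    rewrite (@lcoef_red _ _ m') ?q1 //; apply: esym; apply: shift_eq.
    by rewrite -reduce_catl.
  move=> g gs ne; case: (eqVneq (lcoef p g) 0) => [->|nz]; first by rewrite mul0r.
  case: (top_nz tp nz) => [lt|e]; last by rewrite -(supp_red gs) e eqxx in ne.
  rewrite (top_gt tq) ?mulr0 // fw_cat fw_winv !fw_cat fm fm'.
  lia.
- by rewrite fw_cat fm fm'.
move=> w hw hn; rewrite lcoef_conv big1_seq // => g /andP [_ gs].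
case: (eqVneq (lcoef p g) 0) => [->|nz]; first by rewrite mul0r.
case: (top_nz tp nz) => [lt|e].
  by rewrite (top_gt tq) ?mulr0 // fw_cat fw_winv; lia.
rewrite hq ?mulr0 //.
  by rewrite fw_cat fw_winv (fw_red e) fm; lia.
apply/negP => /eqP e2; case/negP: hn; apply/eqP.
have := shift_eq e2; rewrite winvK => ->.
by apply: reduce_congl.
Qed.

Lemma lcoef_nz_le p g0 w : g0 \in supp p ->
  (forall g', g' \in supp p -> lcoef p g' != 0 -> fw g' <= fw g0) ->
  lcoef p w != 0 -> fw w <= fw g0.
Proof.
move=> _ hg nz; rewrite -fw_reduce; apply: hg; first exact: lcoef_supp.
by rewrite (lcoef_red _ (reduceK w)).
Qed.

Lemma div_top p q r m' t v' u : top q m' v' -> leq_poly (lmul p q) r ->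
  top r t u -> top p (t ++ winv m') (u - v').
Proof.
move=> tq e tr; have [q1 fm' hq] := tq; have [r1 ft hr] := tr.
have hex : has (fun g => lcoef p g != 0) (supp p).
  apply/negPn/negP => hn.
  have : lcoef r t = 0.
    rewrite -e lcoef_conv big1_seq // => g /andP[_ gs].
    have : ~~ (lcoef p g != 0) by apply: contra hn => h; apply/hasP; exists g.
    by rewrite negbK => /eqP ->; rewrite mul0r.
  by rewrite r1.
have [g0 [g0s nz0 hg0]] := argmax fw hex.
set V := fw g0.
have hle := lcoef_nz_le g0s hg0.
have hc : forall w, fw w = V -> lcoef p w != 0 -> lcoef r (w ++ m') = lcoef p w.
  move=> w fwV nz; rewrite -e lcoef_conv (@sum_one _ (reduce w)) ?undup_uniq //.
  - rewrite (lcoef_red _ (reduceK w)) (@lcoef_red q _ m') ?q1 ?mulr1 //.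
    apply: esym; apply: shift_eq; by rewrite -reduce_catl.
  - exact: lcoef_supp.
  move=> g gs ne; case: (eqVneq (lcoef p g) 0) => [->|nz']; first by rewrite mul0r.
  have hgV := hle _ nz'.
  rewrite hq ?mulr0 //; first by rewrite !fw_cat fw_winv fwV; lia.
  apply/negP => /eqP e2; case/negP: ne; apply/eqP.
  have := shift_eq e2; rewrite winvK => h.
  by rewrite -(supp_red gs); apply: cancel_r (esym h).
have hd : forall w, V + v' < fw w -> lcoef r w = 0.
  move=> w hw; rewrite -e lcoef_conv big1_seq // => g /andP[_ gs].
  case: (eqVneq (lcoef p g) 0) => [->|nz']; first by rewrite mul0r.
  have hgV := hle _ nz'.
  by rewrite (top_gt tq) ?mulr0 // fw_cat fw_winv; lia.
have hu : u = V + v'.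
  apply/eqP; rewrite eq_le; apply/andP; split.
    rewrite leNgt; apply/negP => h; have := hd t; rewrite ft r1 => /(_ h) /eqP; by rewrite oner_eq0.
  have : lcoef r (g0 ++ m') != 0 by rewrite hc.
  move/(top_nz tr) => [h|h]; first by move: h; rewrite fw_cat; lia.
  by rewrite -ft -(fw_red h) fw_cat fm'.
have hf : forall w, fw w = V -> lcoef p w != 0 ->
    reduce w = reduce (t ++ winv m') /\ lcoef p w = 1.
  move=> w fwV nz; have := hc _ fwV nz => hcw.
  have : lcoef r (w ++ m') != 0 by rewrite hcw.
  move/(top_nz tr) => [h|h]; first by move: h; rewrite fw_cat hu fwV fm' ltxx.
  split; last by rewrite -hcw (lcoef_red _ h) r1.
  apply: (@cancel_r _ _ m'); rewrite h -catA (reduce_catr t).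
  by rewrite reduce_winvl cats0.
have [h0 p0] := hf g0 erefl nz0.
split.
- by rewrite -(lcoef_red _ h0) p0.
- by rewrite fw_cat fw_winv ft hu /V; lia.
move=> w hw hn; apply/eqP; apply: contraNT hn => nz.
have hwV := hle _ nz.
have fwV : fw w = V by rewrite /V; lia.
by case: (hf w fwV nz) => -> _.
Qed.

Lemma top_lone : top lone [::] 0.
Proof. exact: (top_mono [::]). Qed.

Lemma one_add_pos p m v : top p m v -> 0 < v -> top (ladd lone p) m v.
Proof.
move=> [p1 fm hp] hv; split => //.
- rewrite lcoef_add p1 lcoef_mono; case: eqP => // h.
  by move: hv; rewrite -fm -(fw_red h) /= ltxx.
move=> w hw hn; rewrite lcoef_add hp // lcoef_mono addr0; case: eqP => // h.
by move: hw; rewrite -(fw_red h) /=; move: hv; rewrite -fm => /lt_le_trans h2 /h2; rewrite ltxx.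
Qed.

Lemma one_add_neg p m v : top p m v -> v < 0 -> top (ladd lone p) [::] 0.
Proof.
move=> tp hv; split => //.
- by rewrite lcoef_add lcoef_mono eqxx (top_gt tp) ?addr0.
move=> w hw hn; rewrite lcoef_add (top_gt tp) ?lcoef_mono ?addr0.
  by case: eqP => // h; rewrite h in hn; rewrite eqxx in hn.
exact: lt_le_trans hv hw.
Qed.

Lemma pow4_top p m v : top p m v -> top (lpow p 4) (m ++ (m ++ (m ++ (m ++ [::])))) (v + (v + (v + (v + 0)))).
Proof.
move=> tp; rewrite /lpow /=.
by do 4! apply: mul_top => //; apply: top_lone.
Qed.

End Top.

Unset Implicit Arguments.
Set Strict Implicit.


Theorem lemma4p7 (R : nat -> lpoly)
  (hR0 : leq_poly (R 0%N) (lmono [:: ly; lx; lyi]))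
  (hR1 : leq_poly (R 1%N) (lmono [:: ly]))
  (hev : forall n : nat, (0 < n)%N ->
     leq_poly (lmul (lmul (R (2 * n)%N) (lmono Cw)) (R (2 * n - 2)%N))
              (ladd lone (R (2 * n - 1)%N)))
  (hodd : forall n : nat, (0 < n)%N ->
     leq_poly (lmul (lmul (R (2 * n + 1)%N) (lmono Cw)) (R (2 * n - 1)%N))
              (ladd lone (lpow (R (2 * n)%N) 4)))
  : forall n : nat, (1 <= n)%N ->
      0 < lcoef (lmul (R (2 * n)%N) (R (2 * (n + 1))%N)) Cinvw.
Proof.
move=> n hn.
pose al : int := 3 * n%:Z + 1.
pose be : int := 6 * n%:Z - 1.
have fC : fw al be Cw = 0 by rewrite /fw /lw /=; lia.
have tC := top_mono al be Cw; rewrite fC in tC.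
have sym : forall p q : lpoly, leq_poly p q -> leq_poly q p by move=> p q h w; rewrite h.
have inv : forall j, (j <= n)%N -> exists m m',
    top al be (R (2 * j)%N) m (3 * n%:Z + 1 - 3 * j%:Z) /\
    top al be (R (2 * j + 1)%N) m' (6 * n%:Z - 1 - 6 * j%:Z).
  elim=> [_|j IH hj].
    exists [:: ly; lx; lyi], [:: ly]; split.
      apply: top_eq (sym _ _ hR0); have := top_mono al be [:: ly; lx; lyi].
      by rewrite (_ : fw _ _ _ = 3 * n%:Z + 1 - 3 * 0%:Z) //; rewrite /fw /lw /=; lia.
    apply: top_eq (sym _ _ hR1); have := top_mono al be [:: ly].
    by rewrite (_ : fw _ _ _ = 6 * n%:Z - 1 - 6 * 0%:Z) //; rewrite /fw /lw /=; lia.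
  have [m [m' [t0 t1]]] := IH (ltnW hj).
  have e1 := hev j.+1 isT.
  have E1 : (2 * j.+1 - 2 = 2 * j)%N by lia.
  have E2 : (2 * j.+1 - 1 = 2 * j + 1)%N by lia.
  rewrite E1 E2 in e1.
  have r1 := one_add_pos t1 (_ : 0 < 6 * n%:Z - 1 - 6 * j%:Z).
  have d1 := div_top t0 e1 (r1 ltac:(lia)).
  have d2 := div_top tC (fun _ => erefl) d1.
  have t2 : top al be (R (2 * j.+1)%N) ((m' ++ winv m) ++ winv Cw) (3 * n%:Z + 1 - 3 * j.+1%:Z).
    by move: d2; congr (top _ _ _ _ _); lia.
  have e2 := hodd j.+1 isT; rewrite E2 in e2.
  have r2 := one_add_pos (pow4_top t2) (_ : 0 < _).
  have d3 := div_top t1 e2 (r2 ltac:(lia)).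
  have d4 := div_top tC (fun _ => erefl) d3.
  exists ((m' ++ winv m) ++ winv Cw); eexists; split; first exact: t2.
  by move: d4; congr (top _ _ _ _ _); lia.
have [m [m' [t0 t1]]] := inv n (leqnn n).
have e1 := hev n.+1 isT.
have E1 : (2 * n.+1 - 2 = 2 * n)%N by lia.
have E2 : (2 * n.+1 - 1 = 2 * n + 1)%N by lia.
rewrite E1 E2 in e1.
have r1 := one_add_neg t1 (_ : 6 * n%:Z - 1 - 6 * n%:Z < 0).
have d1 := div_top t0 e1 (r1 ltac:(lia)).
have d2 := div_top tC (fun _ => erefl) d1.
have [h1 _ _] := mul_top t0 d2.
rewrite (_ : (2 * (n + 1) = 2 * n.+1)%N); last by lia.
rewrite (lcoef_red _ (_ : reduce Cinvw = reduce (m ++ (([::] ++ winv m) ++ winv Cw)))) ?h1 //.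
by rewrite /= catA reduce_catl reduce_winvr.
Qed.
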